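(* In the typical setting below, with $\nu_{p-1}=\lfloor\frac{a+(p-1)\ell}{p}\rfloor$, one has $\nu_{p-1}\le e+\frac{(p-1)(r-1)c}{r}$, with equality if and only if $t\ge\frac{rpe}{p-1}-r$.
   Context: Typical setting: $p$ is an odd prime, $K$ a finite extension of $\mathbb{Q}_p$ with absolute ramification index $e$, and $L/K$ a degree $p$ extension whose normal closure $\widetilde L$ is totally ramified over $K$. Then $\mathrm{Gal}(\widetilde L/K)\cong C_p\rtimes C_r$ with $r=[\widetilde L:L]$ dividing $p-1$. The ramification jump $t$ is the integer with $G_t$ of order $p$ and $G_{t+1}=1$ (lower numbering ramification groups of $\widetilde L/K$); one has $1\le t\le rpe/(p-1)$. Assume $L/K$ is typical, i.e. $p\nmid t$ (equivalently $t<rpe/(p-1)$). Let $c$ be the remainder of $t$ mod $r$, $b=(t-pc)/r\in\mathbb{Z}$, $\ell=cp+b=\frac{pc(r-1)+t}{r}$, $a$ the remainder of $\ell$ mod $p$ (so $1\le a\le p-1$). *)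

(* Defs.v *)
From HB Require Import structures.
From mathcomp Require Import all_boot all_order all_algebra.
Set Implicit Arguments. Unset Strict Implicit. Unset Printing Implicit Defensive.
Import Order.TTheory GRing.Theory Num.Theory.
Local Open Scope ring_scope.

(* Numerical invariants attached to a typical degree-p extension, as functions
   of p, r, t (all natural numbers); integer-valued where they may be negative. *)

Definition cc (r t : nat) : nat := (t %% r)%N.
(* b = (t - p c) / r  (an integer; exact division since r | p-1) *)
Definition bb (p r t : nat) : int := ((Posz t - Posz (p * cc r t)%N) %/ Posz r)%Z.
Definition ll (p r t : nat) : int := Posz (cc r t * p)%N + bb p r t.
Definition aa (p r t : nat) : int := (ll p r t %% Posz p)%Z.
Definition nu (p r t : nat) : int :=
  ((aa p r t + Posz p.-1 * ll p r t) %/ Posz p)%Z.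

(* Main.v *)
Require Import Defs.
From HB Require Import structures.
From mathcomp Require Import all_boot all_order all_algebra.
From mathcomp Require Import zify ring lra.
Import Order.TTheory GRing.Theory Num.Theory.
Local Open Scope ring_scope.

Lemma hA (q k c e m r p l : int) : p = m*r+1 -> l = c* p+k-m*c -> l < (q+1)* p ->
  m*(k*r+c) <= p*e -> 0 < r -> 0 < m -> k+c-e <= q.
Proof. move=> hp hl; subst p l; nia. Qed.
Lemma hE1 (q k c e m r p l : int) : p = m*r+1 -> l = c* p+k-m*c -> l < (q+1)* p ->
  q = k+c-e -> p*e < m*(k*r+c) + p.
Proof. move=> hp hl hq2 hq; subst p l q; nia. Qed.
Lemma hE2 (q k c e m r p l : int) : p = m*r+1 -> l = c* p+k-m*c -> q* p <= l ->
  p*e < m*(k*r+c) + p -> 0 < r -> 0 < m -> q < k+c-e+1.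
Proof. move=> hp hl; subst p l; nia. Qed.
Lemma hF (q k c e m r p l : int) : p = m*r+1 -> l = c* p+k-m*c ->
  (l - q = e + m*(r-1)*c <-> q = k+c-e).
Proof. move=> hp hl; subst p l; split => h; lia. Qed.
Lemma hG (q k c e m r p l : int) : p = m*r+1 -> l = c* p+k-m*c -> k+c-e <= q ->
  l - q <= e + m*(r-1)*c.
Proof. move=> hp hl; subst p l; lia. Qed.
Lemma nK (k r c m p e : nat) : (0 < r)%N -> ((k * r + c) * (m * r) <= r * p * e)%N ->
  (m * (k * r + c) <= p * e)%N.
Proof. move=> r0 h; rewrite -(leq_pmul2r r0); move: h; nia. Qed.
Lemma nC (k r c m p e : nat) : (0 < r)%N -> p = (m * r).+1 ->
  (r * p * e <= (k * r + c + r) * (m * r))%N <-> (p * e < m * (k * r + c) + p)%N.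
Proof. move=> r0 hp.
  have -> : ((k * r + c + r) * (m * r) = r * (m * (k * r + c) + p - 1))%N by rewrite hp; nia.
  rewrite -[(r * p * e)%N]mulnA leq_pmul2l //; lia. Qed.

Theorem corollary6p6 (p e r t : nat) :
  prime p -> odd p -> (0 < e)%N ->
  (0 < r)%N -> (r %| p.-1)%N ->
  (1 <= t)%N -> (t * p.-1 <= r * p * e)%N ->
  ~~ (p %| t)%N ->
  let rhs : rat := e%:R + ((p.-1 * r.-1 * cc r t)%N)%:R / r%:R in
  ((nu p r t)%:~R <= rhs) /\
  ((nu p r t)%:~R = rhs <->
     (r * p * e)%N%:R / (p.-1)%:R - r%:R <= (t%:R : rat)).
Proof.
move=> pp _ e0 r0 /dvdnP [m hm] t1 hte _ rhs.
have p2 := prime_gt1 pp.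
set c := cc r t.
set k := (t %/ r)%N.
have ht : t = (k * r + c)%N by rewrite /k /c /cc -divn_eq.
have hc : (c < r)%N by rewrite /c /cc ltn_mod.
have hb : bb p r t = Posz k - Posz m * Posz c.
  rewrite /bb -/c.
  have -> : Posz t - Posz (p * c)%N = (Posz k - Posz m * Posz c) * Posz r.
    have hp : p = (m * r).+1 by rewrite -hm; lia.
    rewrite ht hp; lia.
  by rewrite mulzK // eqz_nat; lia.
set l := ll p r t.
have hl : l = Posz (c * p)%N + Posz k - Posz m * Posz c by rewrite /l /ll hb addrA.
set q := (l %/ Posz p)%Z.
have hp0 : Posz p != 0 by rewrite eqz_nat; lia.
have hq1 := lez_floor l hp0.
have hq2 : l < (q + 1) * Posz p by apply: ltz_ceil; rewrite ltz_nat; lia.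
have hnu : nu p r t = l - q.
  rewrite /nu /aa -/l.
  have -> : (l %% Posz p)%Z + Posz p.-1 * l = (l - q) * Posz p.
    have -> : (l %% Posz p)%Z = l - q * Posz p.
      by rewrite {2}(divz_eq l (Posz p)) -/q; ring.
    have -> : Posz p.-1 = Posz p - 1 by rewrite predn_int; lia.
    ring.
  by rewrite mulzK.
have hrhs : rhs = (Posz e + Posz m * Posz r.-1 * Posz c)%:~R.
  rewrite /rhs -/c hm.
  have r0' : (r%:R : rat) != 0 by rewrite pnatr_eq0; lia.
  rewrite rmorphD /= rmorphM /= rmorphM /= !natrM.
  have -> : ((r.-1)%:R : rat) = (Posz r.-1)%:~R by [].
  rewrite -!pmulrn. congr (_ + _). field; done.
have hp : p = (m * r).+1 by rewrite -hm; lia.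
have hm0 : (0 < m)%N.
  have h0 : (0 < m * r)%N by lia.
  by move: h0; rewrite muln_gt0 => /andP[].
have key : (m * (k * r + c) <= p * e)%N.
  by apply: nK => //; move: hte; rewrite ht hm.
have hcond : ((r * p * e)%N%:R / (p.-1)%:R - r%:R <= (t%:R : rat)) <->
    (p * e < m * (k * r + c) + p)%N.
  have pm : (0 : rat) < (p.-1)%:R by rewrite ltr0n; lia.
  rewrite lerBlDr ler_pdivrMr // -!natrD -natrM ler_nat -(@nC k r c m p e r0 hp) ht hm.
  by [].
rewrite hcond hnu hrhs ler_int; clear hcond hnu hrhs hte.
have keyZ : Posz m * (Posz k * Posz r + Posz c) <= Posz p * Posz e by lia.
have hlZ : l = Posz c * Posz p + Posz k - Posz m * Posz c by rewrite hl; lia.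
have hpZ : Posz p = Posz m * Posz r + 1 by rewrite hp; lia.
have hr1 : Posz r.-1 = Posz r - 1 by lia.
rewrite hr1.
have A := @hA q k c e m r p l hpZ hlZ hq2 keyZ (_ : 0 < Posz r) (_ : 0 < Posz m).
have {}A : Posz k + Posz c - Posz e <= q by apply: A; rewrite ltz_nat.
split; first exact: (@hG q k c e m r p l hpZ hlZ A).
have hcz : (p * e < m * (k * r + c) + p)%N <->
   Posz p * Posz e < Posz m * (Posz k * Posz r + Posz c) + Posz p.
  split => h; lia.
rewrite hcz; split => h.
  move/intr_inj: h => /(@hF q k c e m r p l hpZ hlZ).1 h.
  exact: (@hE1 q k c e m r p l hpZ hlZ hq2 h).
have B : q < Posz k + Posz c - Posz e + 1.
  by apply: (@hE2 q k c e m r p l hpZ hlZ hq1 h); rewrite ltz_nat.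
congr (_%:~R); apply/(@hF q k c e m r p l hpZ hlZ).2.
lia.
Qed.
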